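(* Let $\boldsymbol{u}^\star\in\mathbb{R}^n\setminus\{\boldsymbol{0}\}$ and $f(\boldsymbol{u})=\frac12\|\boldsymbol{u}\boldsymbol{u}^{\mathrm T}-\boldsymbol{u}^\star{\boldsymbol{u}^\star}^{\mathrm T}\|_1$ on $\mathbb{R}^n$. Then for every $\boldsymbol{w}\in\mathbb{R}^n$, $$df(\boldsymbol{u}^\star)(\boldsymbol{w})\ge\min\Big\{\alpha(\boldsymbol{u}^\star),\ \tfrac12\alpha(\boldsymbol{u}^\star)\,|\operatorname{supp}(\boldsymbol{u}^\star)|\Big\}\cdot\|\boldsymbol{w}\|_1,$$ where $\alpha(\boldsymbol{u}^\star):=\min\{|u_i^\star|:i\in\operatorname{supp}(\boldsymbol{u}^\star)\}>0$.
   Context: $\|\cdot\|_1$ is the entrywise $\ell_1$-norm (for vectors and matrices). $\operatorname{supp}(\boldsymbol{x})=\{i:x_i\ne0\}$. $df(\boldsymbol{x})(\boldsymbol{w})=\lim_{t\searrow0}(f(\boldsymbol{x}+t\boldsymbol{w})-f(\boldsymbol{x}))/t$ is the directional derivative (which exists for this $f$). *)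

(* Defs.v *)
From HB Require Import structures.
From mathcomp Require Import all_boot all_order all_algebra.
From mathcomp Require Import all_classical all_reals all_analysis.
Set Implicit Arguments. Unset Strict Implicit. Unset Printing Implicit Defensive.
Import Order.TTheory GRing.Theory Num.Theory.
Import numFieldNormedType.Exports.
Local Open Scope classical_set_scope.
Local Open Scope ring_scope.

Definition l1norm (R : realType) (m n : nat) (A : 'M[R]_(m, n)) : R :=
  \sum_(i < m) \sum_(j < n) `|A i j|.

Definition fobj (R : realType) (n : nat) (us u : 'cV[R]_n) : R :=
  2^-1 * l1norm (u *m u^T - us *m us^T).

Definition supp (R : realType) (n : nat) (x : 'cV[R]_n) : {set 'I_n} :=
  [set i | x i 0 != 0].

(* alpha(x) = min { |x_i| : i in supp x }; the seed (sum of all |x_i|)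
   is >= every |x_i|, so for x <> 0 this is exactly the minimum. *)
Definition alpha (R : realType) (n : nat) (x : 'cV[R]_n) : R :=
  \big[Num.min/(\sum_(i < n) `|x i 0|)]_(i in supp x) `|x i 0|.

Definition dirderiv (R : realType) (n : nat) (f : 'cV[R]_n -> R)
    (x w : 'cV[R]_n) : R :=
  lim ((fun t : R => (f (x + t *: w) - f x) / t) @ 0^'+).

(* Main.v *)
Require Import Defs.
From HB Require Import structures.
From mathcomp Require Import all_boot all_order all_algebra.
From mathcomp Require Import all_classical all_reals all_analysis.
From mathcomp Require Import ring lra.
Import Order.TTheory GRing.Theory Num.Theory.
Local Open Scope ring_scope.
Local Open Scope classical_set_scope.
Import numFieldNormedType.Exports.

Section Aux.
Variables (R : realType) (n : nat) (us w : 'cV[R]_n).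

Definition aa (i j : 'I_n) : R := us i 0 * w j 0 + w i 0 * us j 0.
Definition bb (i j : 'I_n) : R := w i 0 * w j 0.
Definition hh (t : R) : R := 2^-1 * \sum_(i < n) \sum_(j < n) `|aa i j + t * bb i j|.

Lemma g_eq t : 0 < t ->
  (fobj us (us + t *: w) - fobj us us) / t = hh t.
Proof.
move=> t0.
have -> : fobj us us = 0.
  rewrite /fobj /l1norm subrr big1 ?mulr0 // => i _.
  by rewrite big1 // => j _; rewrite mxE normr0.
rewrite subr0 /fobj /l1norm /hh.
have E : forall i j : 'I_n,
  `|((us + t *: w) *m (us + t *: w)^T - us *m us^T) i j| = t * `|aa i j + t * bb i j|.
  move=> i j; rewrite !mxE !big_ord1 !mxE /aa /bb.
  rewrite [X in `|X|](_ : _ = t * (us i 0 * w j 0 + w i 0 * us j 0 + t * (w i 0 * w j 0))).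
    by rewrite normrM gtr0_norm.
  ring.
under eq_bigr => i _ do under eq_bigr => j _ do rewrite E.
under eq_bigr => i _ do rewrite -mulr_sumr.
rewrite -mulr_sumr; field; exact: lt0r_neq0.
Qed.

Lemma hh_cvg : hh t @[t --> 0^'+] --> hh 0.
Proof.
apply: cvg_at_right_filter.
rewrite /hh; apply: cvgMl_tmp.
apply: (@cvg_big _ _ +%R 0 xpredT (@pseudometric_normed_Zmodule.add_continuous _ _)) => // i _.
apply: (@cvg_big _ _ +%R 0 xpredT (@pseudometric_normed_Zmodule.add_continuous _ _)) => // j _.
apply: cvg_norm.
apply: (@cvgD _ _ _ _ _ (fun=> aa i j) (fun x : R => x * bb i j)).
  exact: cvg_cst.
apply: cvgMr_tmp; exact: cvg_id.
Qed.

Lemma dir_eq : dirderiv (fobj us) us w = hh 0.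
Proof.
apply: cvg_lim => //.
apply: cvg_trans hh_cvg.
apply: near_eq_cvg; near=> t.
apply/esym/g_eq; near: t.
exact: nbhs_right_gt.
Unshelve. all: end_near.
Qed.

End Aux.
Arguments aa {R n}. Arguments bb {R n}. Arguments hh {R n}. Arguments dir_eq {R n}.

Theorem proposition1 (R : realType) (n : nat) (us : 'cV[R]_n) :
  us != 0 ->
  forall w : 'cV[R]_n,
    Num.min (alpha us) (2^-1 * alpha us * (#|supp us|)%:R) * l1norm w
      <= dirderiv (fobj us) us w.
Proof.
move=> _ w; rewrite dir_eq /hh /l1norm.
set m := Num.min _ _.
have am : m <= alpha us by rewrite /m ge_min lexx.
have sm : m <= 2^-1 * alpha us * (#|supp us|)%:R by rewrite /m ge_min lexx orbT.
rewrite [X in _ <= _ * X](eq_bigr (fun i => \sum_(j < n) `|aa us w i j|)); last first.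
  by move=> i _; apply: eq_bigr => j _; rewrite mul0r addr0.
rewrite mulr_sumr mulr_sumr; apply: ler_sum => k _.
rewrite big_ord1.
have ge0 : 0 <= `|w k 0| by [].
case: (eqVneq (us k 0) 0) => uk.
- under eq_bigr => j _ do rewrite /aa uk mul0r add0r normrM.
  rewrite -mulr_sumr mulrCA [m * _]mulrC ler_wpM2l //.
  apply: (le_trans sm); rewrite -mulrA ler_wpM2l //.
  have -> : \sum_(j < n) `|us j 0| = \sum_(j in supp us) `|us j 0| + \sum_(j | j \notin supp us) `|us j 0|.
    by rewrite (bigID (fun j => j \in supp us)).
  rewrite mulr_natr -sumr_const; apply: ler_wpDr; first by apply: sumr_ge0.
  apply: ler_sum => j js; exact: bigmin_le_cond.
- rewrite (bigD1 k) //= mulrDr; apply: ler_wpDr.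
    by rewrite mulr_ge0 // ?sumr_ge0 // invr_ge0.
  apply: (le_trans (ler_wpM2r ge0 am)).
  have -> : aa us w k k = 2 * (us k 0 * w k 0) by rewrite /aa; ring.
  have -> : 2^-1 * `|2 * (us k 0 * w k 0)| = `|us k 0| * `|w k 0| by rewrite normrM normrM ger0_norm //; field.
  rewrite ler_wpM2r //.
  apply: bigmin_le_cond; by rewrite /supp inE.
Qed.
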